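(* Let $p\in\mathcal P$. If $\mu(p)\ge\mu_a$, then $\Gamma_{\mu(p)}(p)$ is acyclic. In particular, if $n\in\{2,3\}$, then $\Gamma_{\mu(p)}(p)$ is acyclic for every $p\in\mathcal P$.
   Context: Let $n,h\ge2$, $N=\{1,\dots,n\}$, $H=\{1,\dots,h\}$, $\mathcal P$ the set of $h$-tuples of linear orders on $N$; $x>_{p_i}y$ means $x\neq y$ and $p_i$ ranks $x$ above $y$; for an integer $\mu\in(h/2,h]$, $x>^p_\mu y$ means $|\{i: x>_{p_i}y\}|\ge\mu$; $D_\mu(p)=\{x\in N: \forall y,\ |\{i: y>_{p_i}x\}|<\mu\}$; $\mu(p)=\min\{\mu\in\mathbb N\cap(h/2,h]: D_\mu(p)\ne\varnothing\}$. The acyclicity threshold is $\mu_a=\min\{m\in\mathbb N\cap(h/2,h]: m>\frac{n-2}{n-1}h\}$. $\Gamma_\mu(p)$ is the directed graph $(N,\{(x,y): x>^p_\mu y\})$; it is acyclic if it contains no directed cycle on $l\ge2$ distinct vertices as a subgraph. *)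

(* Defs.v *)
From mathcomp Require Import all_boot.
Set Implicit Arguments. Unset Strict Implicit. Unset Printing Implicit Defensive.

(* N = 'I_n (voters' alternatives, 0-indexed), H = 'I_h (voters).
   A linear order on N is represented by its strict part r : rel 'I_n,
   with  r x y  meaning "x is ranked above y" (x >_{p_i} y). *)
Definition linear_order (n : nat) (r : rel 'I_n) : Prop :=
  [/\ (forall x, ~~ r x x),
      (forall x y z, r x y -> r y z -> r x z) &
      (forall x y, x != y -> r x y || r y x)].

Definition profile (n h : nat) := 'I_h -> rel 'I_n.

Definition is_profile (n h : nat) (p : profile n h) : Prop :=
  forall i, linear_order (p i).

Definition votes (n h : nat) (p : profile n h) (x y : 'I_n) : nat :=
  #|[set i : 'I_h | p i x y]|.

Definition maj (n h : nat) (mu : nat) (p : profile n h) (x y : 'I_n) : bool :=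
  mu <= votes p x y.

Definition inD (n h : nat) (mu : nat) (p : profile n h) (x : 'I_n) : bool :=
  [forall y, votes p y x < mu].

(* mu(p) = min { mu integer in (h/2, h] : D_mu(p) <> empty };
   integers in (h/2,h] are exactly h./2 < mu <= h.  The default h is
   never used since D_h(p) is nonempty. *)
Definition mu_p (n h : nat) (p : profile n h) : nat :=
  \big[minn/h]_((h./2).+1 <= m < h.+1 | [exists x, inD m p x]) m.

(* mu_a = min { m integer in (h/2, h] : m > (n-2)/(n-1) h },
   i.e. m * (n-1) > (n-2) * h (n >= 2). Default h is attained anyway. *)
Definition mu_a (n h : nat) : nat :=
  \big[minn/h]_((h./2).+1 <= m < h.+1 | (n - 2) * h < m * (n - 1)) m.

Definition Gamma (n h : nat) (mu : nat) (p : profile n h) : rel 'I_n :=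
  fun x y => maj mu p x y.

Definition acyclic (n : nat) (e : rel 'I_n) : Prop :=
  forall s : seq 'I_n, 2 <= size s -> uniq s -> ~~ cycle e s.

(* Main.v *)
Require Import Defs.
From mathcomp Require Import all_boot.
From mathcomp Require Import zify.

Lemma sum_bool_le (T : Type) (s : seq T) (b : pred T) :
  \sum_(x <- s) (b x : nat) <= size s.
Proof.
elim: s => [|x s IH]; first by rewrite big_nil.
rewrite big_cons /=; case: (b x) => /=; lia.
Qed.

Lemma sum_bool_lt (T : Type) (s : seq T) (b : pred T) :
  ~~ all b s -> \sum_(x <- s) (b x : nat) < size s.
Proof.
elim: s => [|x s IH]; first by [].
rewrite big_cons /=; case: (b x) => /= H.
- have := IH H; lia.
- have := @sum_bool_le _ s b; lia.
Qed.

Lemma votes_sum n h (p : profile n h) x y :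
  votes p x y = \sum_(i < h) (p i x y : nat).
Proof.
rewrite /votes -sum1_card big_mkcond /=.
apply: eq_bigr => i _; rewrite inE; by case: (p i x y).
Qed.

Lemma voter_bound n h (p : profile n h) (hp : is_profile p) (s : seq 'I_n) i :
  2 <= size s -> uniq s ->
  \sum_(x <- s) (p i x (next s x) : nat) < size s.
Proof.
move=> hs us; apply: (@sum_bool_lt _ s (fun x => p i x (next s x))).
apply/negP => /allP Hall.
have cyc : cycle (p i) s by apply: cycle_from_next.
case: (hp i) => irr tr _.
case: s hs us Hall cyc => [|x s'] //= _ _ _ cyc.
have trT : transitive (p i) by move=> y a c H1 H2; exact: tr H1 H2.
have := order_path_min trT cyc; rewrite all_rcons => /andP[Hx _].
by move: (irr x); rewrite Hx.
Qed.

Lemma sum_lower (T : eqType) (t : seq T) (f : T -> nat) (mu : nat) :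
  (forall x, x \in t -> mu <= f x) -> size t * mu <= \sum_(x <- t) f x.
Proof.
elim: t => [|y s' IH] H; first by rewrite big_nil.
rewrite big_cons /= mulSn; apply: leq_add.
  by apply: H; rewrite inE eqxx.
by apply: IH => z zs; apply: H; rewrite inE zs orbT.
Qed.

Lemma core n h mu (p : profile n h) (hp : is_profile p) x0
  (hx0 : inD mu p x0) (hmu : (n - 2) * h < mu * (n - 1)) :
  acyclic (Gamma mu p).
Proof.
move=> s hs us; apply/negP => cyc.
set l := size s.
have ein : forall x, x \in s -> mu <= votes p x (next s x).
  by move=> x xs; have := next_cycle cyc xs.
have x0s : x0 \notin s.
  apply/negP => xs.
  have ps : prev s x0 \in s by rewrite mem_prev.
  have := ein _ ps; rewrite next_prev //.
  move/forallP: hx0 => /(_ (prev s x0)); lia.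
have hl : l <= n - 1.
  have : l <= #|predC1 x0|.
    rewrite /l -(card_uniqP us); apply: subset_leq_card.
    apply/subsetP => y ys; rewrite !inE; apply/negP => /eqP E.
    by rewrite -E ys in x0s.
  rewrite cardC1 card_ord; lia.
have lower : l * mu <= \sum_(x <- s) votes p x (next s x).
  rewrite /l; exact: (@sum_lower _ s (fun x => votes p x (next s x)) mu ein).
have upper : \sum_(x <- s) votes p x (next s x) <= h * (l - 1).
  under eq_bigr => x _ do rewrite votes_sum.
  rewrite exchange_big /=.
  have : \sum_(i < h) \sum_(x <- s) (p i x (next s x) : nat) <= \sum_(i < h) (l - 1).
    apply: leq_sum => i _; have := @voter_bound _ _ _ hp s i hs us; rewrite -/l; lia.
  by rewrite sum_nat_const card_ord.
have : l * mu <= h * (l - 1) by apply: leq_trans upper.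
rewrite -/l in hs.
nia.
Qed.

Lemma top_exists n h (hn : 0 < n) (hh : 0 < h) (p : profile n h) (hp : is_profile p) :
  exists x, inD h p x.
Proof.
set v0 : 'I_h := Ordinal hh.
set a0 : 'I_n := Ordinal hn.
case: (hp v0) => irr tr _.
set F := fun x : 'I_n => #|[set z | p v0 x z]|.
case: (@arg_maxnP _ a0 predT F isT) => x _ Hmax.
exists x; apply/forallP => y.
have Hy : ~~ p v0 y x.
  apply/negP => yx.
  have : F x < F y.
    rewrite /F; apply: proper_card; apply/properP; split.
      apply/subsetP => z; rewrite !inE => xz; exact: tr yx xz.
    by exists x; rewrite !inE ?yx ?(negbTE (irr x)).
  move=> H; have H2 := Hmax y isT; rewrite /= in H2; lia.
have : votes p y x <= #|[set i : 'I_h | i != v0]|.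
  apply: subset_leq_card; apply/subsetP => i; rewrite !inE.
  apply: contraTneq => ->; exact: Hy.
rewrite cardsE cardC1 card_ord; lia.
Qed.

Lemma mu_p_inD n h (hn : 0 < n) (hh : 0 < h) (p : profile n h) (hp : is_profile p) :
  exists x, inD (mu_p p) p x.
Proof.
rewrite /mu_p; apply: (big_ind (fun m => exists x, inD m p x)).
- exact: top_exists.
- by move=> a b Ha Hb; rewrite /minn; case: ifP.
- by move=> i /existsP.
Qed.

Lemma mu_p_gt n h (hh : 0 < h) (p : profile n h) : h./2 < mu_p p.
Proof.
rewrite /mu_p big_seq_cond; apply: (big_ind (fun m => h./2 < m)).
- rewrite ltn_half_double -addnn; lia.
- by move=> a b Ha Hb; rewrite /minn; case: ifP.
- by move=> i /andP[]; rewrite mem_index_iota => /andP[].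
Qed.

Lemma mu_a_prop n h (hn : 2 <= n) (hh : 0 < h) : (n - 2) * h < mu_a n h * (n - 1).
Proof.
rewrite /mu_a; apply: (big_ind (fun m => (n - 2) * h < m * (n - 1))).
- nia.
- by move=> a b Ha Hb; rewrite /minn; case: ifP.
- by [].
Qed.

Theorem corollary7 (n h : nat) (hn : 2 <= n) (hh : 2 <= h)
    (p : profile n h) (hp : is_profile p) :
  (mu_a n h <= mu_p p -> acyclic (Gamma (mu_p p) p)) /\
  ((n == 2) || (n == 3) -> acyclic (Gamma (mu_p p) p)).
Proof.
have hn0 : 0 < n by lia.
have hh0 : 0 < h by lia.
have [x0 Hx0] := @mu_p_inD n h hn0 hh0 p hp.
split.
- move=> Hle; apply: (@core n h _ p hp x0 Hx0).
  have := @mu_a_prop n h hn hh0.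
  have := leq_mul Hle (leqnn (n - 1)); lia.
- move=> Hn; apply: (@core n h _ p hp x0 Hx0).
  have := @mu_p_gt n h hh0 p; rewrite ltn_half_double -addnn.
  move: (mu_p p) => m; case/orP: Hn => /eqP ->; lia.
Qed.
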